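(* Let $A\subseteq\Gamma$ be a finite set, $D=A-A$, $S=A+A$. Then for every integer $k\ge1$, $$\mathsf{E}^D_k(D)\ge|A^{k+1}-\Delta(A)|\ge|A-A|\,|A|^k,$$ $$\sum_xS(x)(S*D)^k(x)\ge|A^{k+1}+\Delta(A)|\ge|A|^k\max\{|A-A|,|A+A|\},$$ $$\mathsf{E}^D_k(S)\ge|A|^{k-1}|A^2+\Delta(A)|\ge|A|^k\max\{|A-A|,|A+A|\}.$$
   Context: $\Gamma$ is an abelian group; sets are identified with indicator functions. $(f*g)(x)=\sum_yf(y)g(x-y)$, $(f\circ g)(x)=\sum_yf(y)g(y+x)$. For a set $X$, $X_s=X\cap(X-s)$, and for $P\subseteq\Gamma$, $\mathsf{E}^P_k(X)=\sum_{s\in P}|X_s|^k=\sum_{s\in P}(X\circ X)(s)^k$. $A^{n}\pm\Delta(A)=\{(a_1\pm a,\dots,a_n\pm a): a_1,\dots,a_n,a\in A\}\subseteq\Gamma^n$. *)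

(* Defs.v *)
From HB Require Import structures.
From mathcomp Require Import all_boot all_algebra.
From mathcomp Require Import finmap.
Set Implicit Arguments. Unset Strict Implicit. Unset Printing Implicit Defensive.
Import GRing.Theory.
Local Open Scope fset_scope.
Local Open Scope ring_scope.

(* Gamma is an arbitrary (possibly infinite) abelian group: a zmodType.
   Finite subsets of Gamma are finmap's {fset Gamma}; sets are identified
   with their indicator functions (x \in X : nat). *)

Section Defs.
Variable G : zmodType.

Definition diffset (A B : {fset G}) : {fset G} := [fset a - b | a in A, b in B].
Definition sumset (A B : {fset G}) : {fset G} := [fset a + b | a in A, b in B].

Definition fshift (X : {fset G}) (s : G) : {fset G} := [fset x - s | x in X].
Definition Xsub (X : {fset G}) (s : G) : {fset G} := X `&` fshift X s.

Definition energyP (P X : {fset G}) (k : nat) : nat :=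
  \sum_(s <- P) (#|` Xsub X s| ^ k)%N.

(* (X * Y)(x) = \sum_y X(y) Y(x - y) (only y in X contribute) *)
Definition fconv (X Y : {fset G}) (x : G) : nat :=
  \sum_(y <- X) (((x - y)%R \in Y) : nat).

(* A^n - Delta(A) and A^n + Delta(A), as finite subsets of Gamma^n,
   elements of Gamma^n being represented as {ffun 'I_n -> G}. *)
Definition tupShift (n : nat) (A : {fset G}) (sgn : bool)
  (f : {ffun 'I_n -> A}) (a : A) : {ffun 'I_n -> G} :=
  [ffun i => val (f i) + (if sgn then val a else - val a)].

Definition tupDiag (n : nat) (A : {fset G}) (sgn : bool) : {fset {ffun 'I_n -> G}} :=
  [fset tupShift sgn f a | f in {: {ffun 'I_n -> A}}, a in {: A}].

Definition tupMinusDiag (n : nat) (A : {fset G}) := tupDiag n A false.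
Definition tupPlusDiag (n : nat) (A : {fset G}) := tupDiag n A true.
End Defs.

(* Main.v *)
Require Import Defs.
From HB Require Import structures.
From mathcomp Require Import all_boot all_algebra.
From mathcomp Require Import finmap.
Local Open Scope fset_scope.
Local Open Scope ring_scope.
Import GRing.Theory.
Set Implicit Arguments. Unset Strict Implicit.
Lemma card_ge (K : choiceType) (T : finType) (X : {fset K}) (f : T -> K) :
  injective f -> (forall t, f t \in X) -> (#|T| <= #|` X|)%N.
Proof.
move=> fi fX; rewrite cardfE.
have h : injective (fun t => [` fX t] : X) by move=> a b /(congr1 val) /fi.
exact: leq_card h.
Qed.

Lemma card_le_sigma (T : finType) (K1 K2 : choiceType) (D : {fset K1})
  (Y : K1 -> {fset K2}) (m : nat) (g1 : T -> K1) (g2 : T -> 'I_m -> K2)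
  (h1 : forall t, g1 t \in D) (h2 : forall t j, g2 t j \in Y (g1 t))
  (hi : forall t u, g1 t = g1 u -> (forall j, g2 t j = g2 u j) -> t = u) :
  (#|T| <= \sum_(s <- D) #|` Y s| ^ m)%N.
Proof.
pose g (t : T) : {s : D & {ffun 'I_m -> Y (val s)}} :=
  existT _ [` h1 t] [ffun j => [` h2 t j]].
have gi : injective g.
  move=> t u e; apply: hi; first exact: (congr1 (fun z => val (tag z)) e).
  move=> j; have := congr1 (fun z : {s : D & {ffun 'I_m -> Y (val s)}} => (val (tagged z j) : K2)) e.
  by rewrite /= !ffunE.
apply: leq_trans (leq_card _ gi) _.
rewrite card_tagged sumnE big_map big_enum /= big_seq_fsetE /=.
by apply: leq_sum => s _; rewrite card_ffun card_ord cardfE.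
Qed.
Section S.
Variable G : zmodType.
Implicit Types (A X : {fset G}).

Lemma mem_diff A x : reflect (exists u v, [/\ u \in A, v \in A & x = u - v]) (x \in diffset A A).
Proof.
apply: (iffP (imfset2P _ _ _ _ _)) => [[u uA [v vA ->]]|[u [v [uA vA ->]]]].
  by exists u, v.
by exists u => //; exists v.
Qed.

Lemma mem_sum A x : reflect (exists u v, [/\ u \in A, v \in A & x = u + v]) (x \in sumset A A).
Proof.
apply: (iffP (imfset2P _ _ _ _ _)) => [[u uA [v vA ->]]|[u [v [uA vA ->]]]].
  by exists u, v.
by exists u => //; exists v.
Qed.

Lemma mem_Xsub X s y : (y \in Xsub X s) = (y \in X) && (y + s \in X).
Proof.
rewrite /Xsub in_fsetI; congr andb; apply/imfsetP/idP => [[x xX ->]|h].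
  by rewrite subrK.
by exists (y + s) => //; rewrite addrK.
Qed.

Lemma mem_tup n A sgn (x : {ffun 'I_n -> G}) :
  reflect (exists2 a, a \in A & forall i, x i - (if sgn then a else - a) \in A)
          (x \in tupDiag n A sgn).
Proof.
apply: (iffP (imfset2P _ _ _ _ _)) => [[f _ [a _ ->]]|[a aA h]].
  exists (val a); first exact: fsvalP.
  by move=> i; rewrite ffunE addrK fsvalP.
exists [ffun i => [` h i]] => //; exists [` aA] => //.
by apply/ffunP => i; rewrite !ffunE /= subrK.
Qed.

Lemma memTM n A (x : {ffun 'I_n -> G}) :
  reflect (exists2 a, a \in A & forall i, x i + a \in A) (x \in tupMinusDiag n A).
Proof.
apply: (iffP (mem_tup _ _ _)) => [[a aA h]|[a aA h]]; exists a => // i.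
  by have := h i; rewrite opprK.
by rewrite opprK.
Qed.

Lemma memTP n A (x : {ffun 'I_n -> G}) :
  reflect (exists2 a, a \in A & forall i, x i - a \in A) (x \in tupPlusDiag n A).
Proof. by apply: (iffP (mem_tup _ _ _)) => [[a aA h]|[a aA h]]; exists a. Qed.

Definition rep2 A (P : G -> G -> bool) : G * G :=
  odflt (0, 0) (omap (fun p : A * A => (val p.1, val p.2)) [pick p : A * A | P (val p.1) (val p.2)]).

Lemma rep2P A (P : G -> G -> bool) : (exists u v, [/\ u \in A, v \in A & P u v]) ->
  [/\ (rep2 A P).1 \in A, (rep2 A P).2 \in A & P (rep2 A P).1 (rep2 A P).2].
Proof.
move=> [u [v [uA vA Puv]]]; rewrite /rep2; case: pickP => [[p q] /= Hp|/(_ ([` uA], [` vA]))/=].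
  by rewrite !fsvalP.
by rewrite Puv.
Qed.

Definition repD A d := rep2 A (fun u v => u - v == d).
Definition repS A d := rep2 A (fun u v => u + v == d).

Lemma repDP A d : d \in diffset A A ->
  [/\ (repD A d).1 \in A, (repD A d).2 \in A & (repD A d).1 - (repD A d).2 = d].
Proof.
move/mem_diff=> [u [v [uA vA e]]].
have [] := @rep2P A (fun u v => u - v == d); last by move=> ? ? /eqP.
by exists u, v; rewrite e eqxx.
Qed.

Lemma repSP A d : d \in sumset A A ->
  [/\ (repS A d).1 \in A, (repS A d).2 \in A & (repS A d).1 + (repS A d).2 = d].
Proof.
move/mem_sum=> [u [v [uA vA e]]].
have [] := @rep2P A (fun u v => u + v == d); last by move=> ? ? /eqP.
by exists u, v; rewrite e eqxx.
Qed.


Lemma ffun2 (x y : {ffun 'I_2 -> G}) :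
  x ord0 = y ord0 -> x (lift ord0 ord0) = y (lift ord0 ord0) -> x = y.
Proof.
move=> e0 e1; apply/ffunP => i; case: (unliftP ord0 i) => [j ->|-> //].
by rewrite (ord1 j).
Qed.

Lemma part1 A k : (#|` tupMinusDiag k.+1 A| <= energyP (diffset A A) (diffset A A) k)%N.
Proof.
rewrite cardfE /energyP.
apply: (@card_le_sigma (tupMinusDiag k.+1 A) _ _ (diffset A A) (Xsub (diffset A A)) k
  (fun t => val t ord0) (fun t j => val t (lift ord0 j) - val t ord0)).
- move=> t; have /memTM [a aA h] := fsvalP t.
  by apply/mem_diff; exists (val t ord0 + a), a; split => //; rewrite addrK.
- move=> t j; have /memTM [a aA h] := fsvalP t.
  rewrite mem_Xsub subrK; apply/andP; split; apply/mem_diff.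
    exists (val t (lift ord0 j) + a), (val t ord0 + a); split => //.
    by rewrite opprD addrACA subrr addr0.
  by exists (val t (lift ord0 j) + a), a; split => //; rewrite addrK.
- move=> t u e1 e2; apply/val_inj/ffunP => i; case: (unliftP ord0 i) => [j ->|-> //].
  move: (e2 j) => /(congr1 (fun z => z + val t ord0)).
  by rewrite subrK e1 subrK.
Qed.

Lemma part2 A k : (#|` diffset A A| * #|` A| ^ k <= #|` tupMinusDiag k.+1 A|)%N.
Proof.
have -> : (#|` diffset A A| * #|` A| ^ k = #|{: diffset A A * {ffun 'I_k -> A}}|)%N.
  by rewrite card_prod card_ffun card_ord !cardfE.
refine (@card_ge _ _ (tupMinusDiag k.+1 A) (fun p : diffset A A * {ffun 'I_k -> A} =>
  [ffun i : 'I_k.+1 => if unlift ord0 i is Some j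
     then val (p.2 j) - (repD A (val p.1)).2 else val p.1]) _ _).
- move=> [d b] [d' b'] e.
  have e0 := congr1 (fun x : {ffun 'I_k.+1 -> G} => x ord0) e.
  rewrite /= !ffunE unlift_none /= in e0.
  have dd : d = d' by apply: val_inj.
  subst d'; congr pair; apply/ffunP => j; apply: val_inj.
  have := congr1 (fun x : {ffun 'I_k.+1 -> G} => x (lift ord0 j)) e.
  rewrite /= !ffunE liftK; exact: addIr.
- move=> [d b]; apply/memTM; have [uA vA e] := repDP (fsvalP d).
  exists (repD A (val d)).2 => // i; rewrite ffunE; case: (unlift ord0 i) => [j|] /=.
    by rewrite subrK fsvalP.
  by rewrite -{1}e subrK.
Qed.

Lemma part3 A k : (#|` tupPlusDiag k.+1 A| <=
   \sum_(x <- sumset A A) (fconv (sumset A A) (diffset A A) x ^ k)%N)%N.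
Proof.
have -> : (\sum_(x <- sumset A A) (fconv (sumset A A) (diffset A A) x ^ k)%N =
   \sum_(x <- sumset A A) #|` [fset y in sumset A A | ((x - y)%R \in diffset A A)]| ^ k)%N.
  apply: eq_bigr => x _; congr (_ ^ _)%N.
  rewrite /fconv card_fset_sum1 -big_fset_condE [RHS]big_mkcond.
  by apply: eq_bigr => y _; case: (_ \in _).
rewrite cardfE.
apply: (@card_le_sigma (tupPlusDiag k.+1 A) _ _ (sumset A A) _ k
  (fun t => val t ord0) (fun t j => val t (lift ord0 j))).
- move=> t; have /memTP [a aA h] := fsvalP t.
  by apply/mem_sum; exists (val t ord0 - a), a; split => //; rewrite subrK.
- move=> t j; have /memTP [a aA h] := fsvalP t.
  rewrite !inE /=; apply/andP; split.
    by apply/mem_sum; exists (val t (lift ord0 j) - a), a; split => //; rewrite subrK.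
  apply/mem_diff; exists (val t ord0 - a), (val t (lift ord0 j) - a); split => //.
  by rewrite opprB addrA subrK.
- move=> t u e1 e2; apply/val_inj/ffunP => i; case: (unliftP ord0 i) => [j ->|-> //].
  exact: e2.
Qed.


Lemma part5 A k : (#|` A| ^ k * #|` tupPlusDiag 2 A| <=
   energyP (diffset A A) (sumset A A) k.+1)%N.
Proof.
have -> : (#|` A| ^ k * #|` tupPlusDiag 2 A| =
    #|{: {ffun 'I_k -> A} * tupPlusDiag 2 A}|)%N.
  by rewrite card_prod card_ffun card_ord !cardfE.
rewrite /energyP.
pose g1 (t : {ffun 'I_k -> A} * tupPlusDiag 2 A) :=
  val t.2 (lift ord0 ord0) - val t.2 ord0.
apply: (@card_le_sigma _ _ _ (diffset A A) (Xsub (sumset A A)) k.+1 g1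
  (fun t j => if unlift ord0 j is Some j' then (repD A (g1 t)).2 + val (t.1 j')
              else val t.2 ord0)).
- move=> t; have /memTP [a aA h] := fsvalP t.2.
  apply/mem_diff; exists (val t.2 (lift ord0 ord0) - a), (val t.2 ord0 - a).
  by split => //; rewrite /g1 opprB addrA subrK.
- move=> t j; have /memTP [a aA h] := fsvalP t.2.
  have g1D : g1 t \in diffset A A.
    apply/mem_diff; exists (val t.2 (lift ord0 ord0) - a), (val t.2 ord0 - a).
    by split => //; rewrite /g1 opprB addrA subrK.
  have [uA vA e] := repDP g1D.
  rewrite mem_Xsub; case: (unlift ord0 j) => [j'|]; apply/andP; split.
  + by apply/mem_sum; exists (repD A (g1 t)).2, (val (t.1 j')); split => //; exact: fsvalP.
  + apply/mem_sum; exists (repD A (g1 t)).1, (val (t.1 j')); split => //; first exact: fsvalP.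
    by rewrite -{2}e addrC addrA subrK.
  + by apply/mem_sum; exists (val t.2 ord0 - a), a; split => //; rewrite subrK.
  + apply/mem_sum; exists (val t.2 (lift ord0 ord0) - a), a; split => //.
    by rewrite /g1 addrC subrK subrK.
- move=> [c x] [c' y] e1 e2.
  have e0 := e2 ord0; rewrite unlift_none /= in e0.
  have xy : x = y.
    apply/val_inj/ffun2 => //; move: e1; rewrite /g1 /= e0.
    by move/(congr1 (fun z => z + val y ord0)); rewrite !subrK.
  subst y; congr pair; apply/ffunP => j; apply: val_inj.
  by have := e2 (lift ord0 j); rewrite liftK /= e1; exact: addrI.
Qed.

Lemma part6a A : (#|` diffset A A| * #|` A| <= #|` tupPlusDiag 2 A|)%N.
Proof.
have -> : (#|` diffset A A| * #|` A| = #|{: diffset A A * A}|)%N.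
  by rewrite card_prod !cardfE.
refine (@card_ge _ _ (tupPlusDiag 2 A) (fun p : diffset A A * A =>
  [ffun i : 'I_2 => if unlift ord0 i is Some _
     then (repD A (val p.1)).2 + val p.2 else (repD A (val p.1)).1 + val p.2]) _ _).
- move=> [d b] [d' b'] e.
  have e0 := congr1 (fun x : {ffun 'I_2 -> G} => x ord0) e.
  have e1 := congr1 (fun x : {ffun 'I_2 -> G} => x (lift ord0 ord0)) e.
  rewrite /= !ffunE unlift_none liftK /= in e0 e1.
  have [_ _ ed] := repDP (fsvalP d); have [_ _ ed'] := repDP (fsvalP d').
  have dd : d = d'.
    apply: val_inj => /=; rewrite -ed -ed'.
    rewrite -[LHS](addrKA (val b)) -[RHS](addrKA (val b')).
    by rewrite !(addrC (val _)) e0 e1.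
  subst d'; congr pair; apply: val_inj; exact: addrI e0.
- move=> [d b]; apply/memTP; have [uA vA e] := repDP (fsvalP d).
  exists (val b); first exact: fsvalP.
  by move=> i; rewrite ffunE; case: (unlift ord0 i) => [j|] /=; rewrite addrK.
Qed.

Lemma part6b A : (#|` sumset A A| * #|` A| <= #|` tupPlusDiag 2 A|)%N.
Proof.
have -> : (#|` sumset A A| * #|` A| = #|{: sumset A A * A}|)%N.
  by rewrite card_prod !cardfE.
refine (@card_ge _ _ (tupPlusDiag 2 A) (fun p : sumset A A * A =>
  [ffun i : 'I_2 => if unlift ord0 i is Some _
     then val p.2 + (repS A (val p.1)).2 else val p.1]) _ _).
- move=> [d b] [d' b'] e.
  have e0 := congr1 (fun x : {ffun 'I_2 -> G} => x ord0) e.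
  have e1 := congr1 (fun x : {ffun 'I_2 -> G} => x (lift ord0 ord0)) e.
  rewrite /= !ffunE unlift_none liftK /= in e0 e1.
  have dd : d = d' by apply: val_inj.
  subst d'; congr pair; apply: val_inj; exact: addIr e1.
- move=> [d b]; apply/memTP; have [uA vA e] := repSP (fsvalP d).
  exists (repS A (val d)).2 => //.
  move=> i; rewrite ffunE; case: (unlift ord0 i) => [j|] /=.
    by rewrite addrK fsvalP.
  by rewrite -{1}e addrK.
Qed.

Lemma part4b A k : (#|` A| ^ k * #|` tupPlusDiag 2 A| <= #|` tupPlusDiag k.+2 A|)%N.
Proof.
have -> : (#|` A| ^ k * #|` tupPlusDiag 2 A| =
    #|{: {ffun 'I_k -> A} * tupPlusDiag 2 A}|)%N.
  by rewrite card_prod card_ffun card_ord !cardfE.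
pose w (t : {ffun 'I_k -> A} * tupPlusDiag 2 A) := (rep2 A (fun a _ =>
  (val t.2 ord0 - a \in A) && (val t.2 (lift ord0 ord0) - a \in A))).1.
have wP (t : {ffun 'I_k -> A} * tupPlusDiag 2 A) : (val t.2 ord0 - w t \in A) && (val t.2 (lift ord0 ord0) - w t \in A).
  have /memTP [a aA h] := fsvalP t.2.
  have [] := @rep2P A (fun a _ =>
    (val t.2 ord0 - a \in A) && (val t.2 (lift ord0 ord0) - a \in A)) => //.
  by exists a, a; split => //; rewrite !h.
have wA (t : {ffun 'I_k -> A} * tupPlusDiag 2 A) : w t \in A.
  have /memTP [a aA h] := fsvalP t.2.
  have [] := @rep2P A (fun a _ =>
    (val t.2 ord0 - a \in A) && (val t.2 (lift ord0 ord0) - a \in A)) => //.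
  by exists a, a; split => //; rewrite !h.
refine (@card_ge _ _ (tupPlusDiag k.+2 A)
  (fun t : {ffun 'I_k -> A} * tupPlusDiag 2 A =>
  [ffun i : 'I_k.+2 => match unlift ord0 i with
     | None => val t.2 ord0
     | Some i' => match unlift ord0 i' with
                  | None => val t.2 (lift ord0 ord0)
                  | Some j => val (t.1 j) + w t end end]) _ _).
- move=> [c x] [c' y] e.
  have e0 := congr1 (fun z : {ffun 'I_k.+2 -> G} => z ord0) e.
  have e1 := congr1 (fun z : {ffun 'I_k.+2 -> G} => z (lift ord0 ord0)) e.
  rewrite /= !ffunE unlift_none liftK unlift_none /= in e0 e1.
  have xy : x = y by apply/val_inj/ffun2.
  subst y; congr pair; apply/ffunP => j; apply: val_inj.
  have := congr1 (fun z : {ffun 'I_k.+2 -> G} => z (lift ord0 (lift ord0 j))) e.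
  rewrite /= !ffunE !liftK /=; exact: addIr.
- move=> t; apply/memTP; exists (w t) => //.
  move=> i; rewrite ffunE; case: (unlift ord0 i) => [i'|].
    case: (unlift ord0 i') => [j|]; last by case/andP: (wP t).
    by rewrite addrK fsvalP.
  by case/andP: (wP t).
Qed.

End S.

Theorem proposition5 (G : zmodType) (A : {fset G}) (k : nat) :
  (0 < k)%N ->
  let D := diffset A A in
  let S := sumset A A in
  ((#|` tupMinusDiag k.+1 A| <= energyP D D k)%N /\
   (#|` D| * #|` A| ^ k <= #|` tupMinusDiag k.+1 A|)%N) /\
  ((#|` tupPlusDiag k.+1 A| <= \sum_(x <- S) (fconv S D x ^ k)%N)%N /\
   (#|` A| ^ k * maxn #|` D| #|` S| <= #|` tupPlusDiag k.+1 A|)%N) /\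
  ((#|` A| ^ k.-1 * #|` tupPlusDiag 2 A| <= energyP D S k)%N /\
   (#|` A| ^ k * maxn #|` D| #|` S| <= #|` A| ^ k.-1 * #|` tupPlusDiag 2 A|)%N).
Proof.
case: k => // k _ D S.
have H6 : (#|` A| ^ k.+1 * maxn #|` D| #|` S| <= #|` A| ^ k * #|` tupPlusDiag 2 A|)%N.
  rewrite expnS -mulnA mulnCA; apply: leq_mul => //.
  rewrite mulnC maxnMl geq_max; apply/andP; split; [exact: part6a | exact: part6b].
split; [split|split; [split|split]].
- exact: part1.
- exact: part2.
- exact: part3.
- exact: leq_trans H6 (part4b A k).
- exact: part5.
- exact: H6.
Qed.
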